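(* Let $\mathbb{X}$ be a finite-dimensional smooth real Banach space (of dimension at least $2$). Then there exist $x,y\in S_{\mathbb{X}}$ with $y\neq\pm x$ such that $(x,y)$ is a weak CPP.
   Context: $S_{\mathbb{X}}$ is the unit sphere; $B(x,r)=\{u:\|u-x\|<r\}$. $x\perp_B y$ means $\|x+\lambda y\|\ge\|x\|$ for all real $\lambda$; $x^\perp=\{y:x\perp_B y\}$. For $x,y\in S_{\mathbb{X}}$, $(x,y)$ is a weak CPP if there exist $z\in x^\perp\cap S_{\mathbb{X}}$, $w\in y^\perp\cap S_{\mathbb{X}}$, $r>0$, $\mu>0$ such that for all $a,b\in\mathbb{R}$, $ax+bz\in B(x,r)\cap S_{\mathbb{X}}$ implies $\|ay+b\mu w\|\le1$. *)

(* Defs.v *)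
From HB Require Import structures.
From mathcomp Require Import all_boot all_order all_algebra.
From mathcomp Require Import all_classical all_reals all_analysis.
Set Implicit Arguments. Unset Strict Implicit. Unset Printing Implicit Defensive.
Import Order.TTheory GRing.Theory Num.Theory.
Import numFieldNormedType.Exports.
Local Open Scope ring_scope.

Section Defs.
Variables (R : realType) (V : normedModType R).

Definition BJ_orth (x y : V) : Prop := forall l : R, `|x| <= `|x + l *: y|.

Definition unit_sphere : set V := [set x | `|x| = 1].

Definition open_ball (x : V) (r : R) : set V := [set u | `|u - x| < r].

(* (x,y) is a weak CPP (x, y assumed on the unit sphere by the caller) *)
Definition weak_CPP (x y : V) : Prop :=
  exists (z w : V) (r mu : R),
    [/\ BJ_orth x z /\ unit_sphere z, BJ_orth y w /\ unit_sphere w,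
        0 < r, 0 < mu &
        forall a b : R, open_ball x r (a *: x + b *: z) ->
          unit_sphere (a *: x + b *: z) ->
          `|a *: y + b *: (mu *: w)| <= 1].

Definition supporting_functional (x : V) (f : V -> R) : Prop :=
  [/\ forall u v, f (u + v) = f u + f v,
      forall (a : R) u, f (a *: u) = a * f u,
      forall u, `|f u| <= `|u| & f x = 1].

Definition smooth : Prop :=
  forall x : V, `|x| = 1 -> forall f g : V -> R,
    supporting_functional x f -> supporting_functional x g -> f = g.

Definition has_dim (n : nat) : Prop :=
  exists e : 'I_n -> V,
    (forall v : V, exists c : 'I_n -> R, v = \sum_(i < n) c i *: e i) /\
    (forall c : 'I_n -> R, \sum_(i < n) c i *: e i = 0 -> forall i, c i = 0).

End Defs.

(* Main.v *)
Require Import Defs.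
From HB Require Import structures.
From mathcomp Require Import all_boot all_order all_algebra.
From mathcomp Require Import all_classical all_reals all_analysis.
From mathcomp Require Import ring lra zify.
Import Order.TTheory GRing.Theory Num.Theory.
Import numFieldNormedType.Exports.
Local Open Scope ring_scope.


Section Core.
Variables (R : realType) (V : normedModType R) (u v : V).

Definition L (p q : R) : V := p *: u + q *: v.

Lemma Lcomb a b p q p' q' :
  a *: L p q + b *: L p' q' = L (a * p + b * p') (a * q + b * q').
Proof.
rewrite /L !scalerDr !scalerA !scalerDl.
by rewrite addrACA.
Qed.

Lemma LZ a p q : a *: L p q = L (a * p) (a * q).
Proof. by rewrite /L scalerDr !scalerA. Qed.

Lemma conv_id (Y W : V) (s l : R) : Y + (s * l) *: W = (1 - s) *: Y + s *: (Y + l *: W).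
Proof. by rewrite scalerDr scalerA scalerBl scale1r addrA subrK. Qed.

Lemma sq_le1 (x : R) : 0 <= x -> 1 <= x ^+ 2 -> 1 <= x.
Proof. move=> h0 h1; nra. Qed.

Lemma sq_ge1 (x : R) : 0 <= x -> x ^+ 2 <= 1 -> x <= 1.
Proof. move=> h0 h1; nra. Qed.

Variables (m M : R).
Hypothesis m0 : 0 < m.
Hypothesis hlo : forall p q, m * (p ^+ 2 + q ^+ 2) <= `|L p q| ^+ 2.
Hypothesis hup : forall p q, `|L p q| ^+ 2 <= M * (p ^+ 2 + q ^+ 2).

Lemma core p0 q0 p1 q1 :
  `|L p0 q0| = 1 -> m * (p0 ^+ 2 + q0 ^+ 2) = 1 ->
  `|L p1 q1| = 1 -> M * (p1 ^+ 2 + q1 ^+ 2) = 1 ->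
  weak_CPP (L p0 q0) (L p1 q1).
Proof.
move=> nx qx ny qy.
set n2 := `|L (- q0) p0|.
set n3 := `|L (- q1) p1|.
have n2sq : 1 <= n2 ^+ 2.
  by apply: le_trans (hlo _ _); rewrite sqrrN addrC qx.
have M0 : 0 < M.
  have Q0 : 0 <= p1 ^+ 2 + q1 ^+ 2 by nra.
  nra.
have n3sq : 0 < n3 ^+ 2.
  apply: lt_le_trans (hlo _ _).
  apply: mulr_gt0 => //.
  have : 0 < p1 ^+ 2 + q1 ^+ 2 by nra.
  by rewrite sqrrN addrC.
have n2p : 0 < n2 by rewrite /n2 lt_neqAle normr_ge0 andbT eq_sym; apply/eqP => h; move: n2sq; rewrite /n2 h; lra.
have n3p : 0 < n3 by rewrite /n3 lt_neqAle normr_ge0 andbT eq_sym; apply/eqP => h; move: n3sq; rewrite /n3 h; lra.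
have lowx : forall a b, a ^+ 2 + b ^+ 2 / n2 ^+ 2 <= `|a *: L p0 q0 + b *: (n2^-1 *: L (- q0) p0)| ^+ 2.
  move=> a b; rewrite scalerA Lcomb; apply: le_trans (hlo _ _).
  set t := b * n2^-1.
  have -> : m * ((a * p0 + t * - q0) ^+ 2 + (a * q0 + t * p0) ^+ 2) =
     (m * (p0 ^+ 2 + q0 ^+ 2)) * (a ^+ 2 + t ^+ 2) by ring.
  by rewrite qx mul1r /t exprMn exprVn.
have upy : forall a b, `|a *: L p1 q1 + b *: (n3^-1 *: L (- q1) p1)| ^+ 2 <= a ^+ 2 + b ^+ 2 / n3 ^+ 2.
  move=> a b; rewrite scalerA Lcomb; apply: le_trans (hup _ _) _.
  set t := b * n3^-1.
  have -> : M * ((a * p1 + t * - q1) ^+ 2 + (a * q1 + t * p1) ^+ 2) =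
     (M * (p1 ^+ 2 + q1 ^+ 2)) * (a ^+ 2 + t ^+ 2) by ring.
  by rewrite qy mul1r /t exprMn exprVn.
set x := L p0 q0; set y := L p1 q1.
set z := n2^-1 *: L (- q0) p0; set w := n3^-1 *: L (- q1) p1.
have nz : `|z| = 1 by rewrite /z normrZ ger0_norm ?invr_ge0 ?ltW // mulVf // gt_eqF.
have nw : `|w| = 1 by rewrite /w normrZ ger0_norm ?invr_ge0 ?ltW // mulVf // gt_eqF.
exists z, w, 1, (n3 / n2); split => //.
- split => // l; rewrite nx; apply: sq_le1 => //.
  have := lowx 1 l; rewrite scale1r expr1n.
  have : 0 <= l ^+ 2 / n2 ^+ 2 by apply: divr_ge0; apply: sqr_ge0.
  move=> h1 h2; apply: le_trans h2; lra.
- split => // l; rewrite ny.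
  case: (lerP 1 `|y + l *: w|) => // hlt; exfalso.
  set N1 := `|y + l *: w| in hlt.
  set d := 1 - N1.
  have d0 : 0 < d by rewrite /d; lra.
  have d1 : d <= 1 by rewrite /d; have := normr_ge0 (y + l *: w); rewrite -/N1; lra.
  set C := l ^+ 2 / n3 ^+ 2.
  have C0 : 0 <= C by apply: divr_ge0; apply: sqr_ge0.
  set s := d / (C + 1).
  have hs : s * (C + 1) = d by rewrite /s divfK // gt_eqF //; lra.
  have s0 : 0 < s by rewrite /s divr_gt0 //; lra.
  have s1 : s <= 1 by nra.
  have ha : `|y + (s * l) *: w| <= 1 - s * d.
    have -> : y + (s * l) *: w = (1 - s) *: y + s *: (y + l *: w).
      by rewrite conv_id.
    apply: le_trans (ler_normD _ _) _.
    rewrite normrZ normrZ ny -/N1 (ger0_norm (ltW s0)) ger0_norm; last by lra.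
    rewrite /d; nra.
  have hb : 2 <= `|y + (s * l) *: w| + `|y - (s * l) *: w|.
    apply: le_trans (ler_normD _ _).
    rewrite addrACA subrr addr0 -mulr2n normrMn ny; lra.
  have hc : `|y - (s * l) *: w| ^+ 2 <= 1 + s ^+ 2 * C.
    have := upy 1 (- (s * l)); rewrite scale1r scaleNr expr1n sqrrN exprMn /C.
    move=> h; rewrite mulrA; exact: h.
  set K := `|y - (s * l) *: w| in hb hc.
  have hK : 1 + s * d <= K by lra.
  have hK2 : (1 + s * d) ^+ 2 <= K ^+ 2.
    by rewrite ler_pXn2r // ?nnegrE; nra.
  have h3 : 2 * s * d <= s ^+ 2 * C by nra.
  have h4 : 2 * d <= s * C by nra.
  nra.
- by rewrite divr_gt0.
- move=> a b _; rewrite /unit_sphere /= => hab.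
  apply: sq_ge1 => //.
  rewrite scalerA; apply: le_trans (upy _ _) _.
  rewrite -(expr1n _ 2) -hab; apply: le_trans (lowx a b).
  have -> : (b * (n3 / n2)) ^+ 2 / n3 ^+ 2 = b ^+ 2 / n2 ^+ 2.
    by field; rewrite !gt_eqF.
  by [].
Qed.
End Core.
Arguments L {R V}.
Arguments core {R V u v m M}.



Section Ext.
Variables (R : realType) (V : normedModType R) (u v : V).

Lemma contL1 : continuous (fun t : R => `|L u v 1 t|).
Proof.
move=> t.
apply: (@continuous_comp _ _ _ (fun t : R => L u v 1 t) (@Num.norm _ V)); last exact: norm_continuous.
rewrite /L; apply: continuousD; first exact: cvg_cst.
by apply: continuousZr_tmp.
Qed.

Lemma contL2 : continuous (fun t : R => `|L u v t 1|).
Proof.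
move=> t.
apply: (@continuous_comp _ _ _ (fun t : R => L u v t 1) (@Num.norm _ V)); last exact: norm_continuous.
rewrite /L; apply: continuousD; last exact: cvg_cst.
by apply: continuousZr_tmp.
Qed.

Lemma contF (g : R -> R) : continuous g ->
  continuous (fun t : R => (g t * g t) * (1 + t * t)^-1).
Proof.
move=> cg t.
have cgg : continuous (fun t => g t * g t).
  by move=> x; exact: (continuousM (cg x) (cg x)).
apply: (@continuousM R _ (fun t => g t * g t) (fun t => (1 + t * t)^-1)); first exact: cgg.
apply: continuousV.
  by rewrite gt_eqF //; nra.
have h1 : {for t, continuous (fun _ : R => (1:R))} by exact: cvg_cst.
have hid : {for t, continuous (fun x : R => x)} by exact: cvg_id.
have h2 : {for t, continuous (fun x : R => x * x)} by exact: (continuousM hid hid).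
exact: (continuousD h1 h2).
Qed.

Lemma sqn (x : R) : `|x| ^+ 2 = x ^+ 2.
Proof. by rewrite real_normK // num_real. Qed.

Lemma bounds (m M : R) :
 (forall s : R, -1 <= s <= 1 -> m * (1 + s * s) <= `|L u v 1 s| ^+ 2 <= M * (1 + s * s)) ->
 (forall s : R, -1 <= s <= 1 -> m * (1 + s * s) <= `|L u v s 1| ^+ 2 <= M * (1 + s * s)) ->
 forall p q, m * (p ^+ 2 + q ^+ 2) <= `|L u v p q| ^+ 2 <= M * (p ^+ 2 + q ^+ 2).
Proof.
move=> h1 h2 p q.
case: (lerP `|q| `|p|) => hqp.
- case: (eqVneq p 0) => [p0|pn0].
  + have q0 : q = 0 by move: hqp; rewrite p0 normr0 normr_le0 => /eqP.
    rewrite p0 q0 /L !scale0r addr0 normr0 expr0n /= addr0 !mulr0.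
    by rewrite lexx.
  + set s := q / p.
    have hq : q = s * p by rewrite /s divfK.
    have hs : -1 <= s <= 1.
      have h : `|s| <= 1 by rewrite /s normrM normfV ler_pdivrMr ?normr_gt0 // mul1r.
      by move: h; rewrite ler_norml.
    have -> : L u v p q = p *: L u v 1 s by rewrite LZ mulr1 mulrC -hq.
    rewrite normrZ exprMn sqn.
    move: (h1 s hs) => /andP[ha hb].
    rewrite hq; apply/andP; split; nra.
- have qn0 : q != 0 by apply/eqP => q0; move: hqp; rewrite q0 normr0 ltNge normr_ge0.
  set s := p / q.
  have hp : p = s * q by rewrite /s divfK.
  have hs : -1 <= s <= 1.
    have h : `|s| <= 1 by rewrite /s normrM normfV ler_pdivrMr ?normr_gt0 // mul1r ltW.
    by move: h; rewrite ler_norml.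
  have -> : L u v p q = q *: L u v s 1 by rewrite LZ mulr1 mulrC -hp.
  rewrite normrZ exprMn sqn.
  move: (h2 s hs) => /andP[ha hb].
  rewrite hp; apply/andP; split; nra.
Qed.

Definition F1 (t : R) := (`|L u v 1 t| * `|L u v 1 t|) * (1 + t * t)^-1.
Definition F2 (t : R) := (`|L u v t 1| * `|L u v t 1|) * (1 + t * t)^-1.

Lemma F_le (m N t : R) : (m <= N * N * (1 + t * t)^-1) = (m * (1 + t * t) <= N ^+ 2).
Proof. by rewrite ler_pdivlMr ?expr2 //; nra. Qed.

Lemma F_ge (m N t : R) : (N * N * (1 + t * t)^-1 <= m) = (N ^+ 2 <= m * (1 + t * t)).
Proof. by rewrite ler_pdivrMr ?expr2 //; nra. Qed.

Hypothesis indep : forall p q, L u v p q = 0 -> p = 0 /\ q = 0.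

Lemma Lpos p q : 0 < p ^+ 2 + q ^+ 2 -> 0 < `|L u v p q|.
Proof.
move=> hQ; rewrite normr_gt0; apply/eqP => /indep [p0 q0].
by move: hQ; rewrite p0 q0 expr0n /= addr0 ltxx.
Qed.

Lemma extr : exists m M : R, [/\ 0 < m,
   (forall p q, m * (p ^+ 2 + q ^+ 2) <= `|L u v p q| ^+ 2 <= M * (p ^+ 2 + q ^+ 2)),
   (exists p q, 0 < p ^+ 2 + q ^+ 2 /\ `|L u v p q| ^+ 2 = m * (p ^+ 2 + q ^+ 2)) &
   (exists p q, 0 < p ^+ 2 + q ^+ 2 /\ `|L u v p q| ^+ 2 = M * (p ^+ 2 + q ^+ 2))].
Proof.
have c1 : ({within `[-1, 1], continuous F1})%classic.
  by apply: continuous_subspaceT; apply: contF; apply: contL1.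
have c2 : ({within `[-1, 1], continuous F2})%classic.
  by apply: continuous_subspaceT; apply: contF; apply: contL2.
have lm1 : (-1 : R) <= 1 by lra.
have [t1 t1i t1m] := EVT_min lm1 c1.
have [t2 t2i t2m] := EVT_min lm1 c2.
have [T1 T1i T1m] := EVT_max lm1 c1.
have [T2 T2i T2m] := EVT_max lm1 c2.
have [m [hm1 hm2 hma]] : exists m, [/\ forall s, s \in `[-1, 1]%R -> m <= F1 s,
     forall s, s \in `[-1, 1]%R -> m <= F2 s & m = F1 t1 \/ m = F2 t2].
  case: (lerP (F1 t1) (F2 t2)) => h.
  - exists (F1 t1); split; [exact: t1m | move=> s hs; apply: le_trans h (t2m _ hs) | by left].
  - exists (F2 t2); split; [move=> s hs; apply: le_trans (ltW h) (t1m _ hs) | exact: t2m | by right].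
have [M [hM1 hM2 hMa]] : exists M, [/\ forall s, s \in `[-1, 1]%R -> F1 s <= M,
     forall s, s \in `[-1, 1]%R -> F2 s <= M & M = F1 T1 \/ M = F2 T2].
  case: (lerP (F1 T1) (F2 T2)) => h.
  - exists (F2 T2); split; [move=> s hs; apply: le_trans (T1m _ hs) h | exact: T2m | by right].
  - exists (F1 T1); split; [exact: T1m | move=> s hs; apply: le_trans (T2m _ hs) (ltW h) | by left].
have Q1 : forall t : R, 0 < 1 ^+ 2 + t ^+ 2 by move=> t; nra.
have Q2 : forall t : R, 0 < t ^+ 2 + 1 ^+ 2 by move=> t; nra.
exists m, M; split.
- case: hma => ->; rewrite /F1 /F2.
  + have := @Lpos _ _ (Q1 t1) => h; apply: mulr_gt0; first exact: mulr_gt0.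
    by rewrite invr_gt0; nra.
  + have := @Lpos _ _ (Q2 t2) => h; apply: mulr_gt0; first exact: mulr_gt0.
    by rewrite invr_gt0; nra.
- apply: bounds => s hs; have hs' : s \in `[-1, 1]%R by rewrite in_itv /=.
  + by rewrite -F_le -F_ge hm1 ?hM1.
  + by rewrite -F_le -F_ge hm2 ?hM2.
- case: hma => ->.
  + exists 1, t1; split => //; rewrite /F1; field; nra.
  + exists t2, 1; split => //; rewrite /F2; field; nra.
- case: hMa => ->.
  + exists 1, T1; split => //; rewrite /F1; field; nra.
  + exists T2, 1; split => //; rewrite /F2; field; nra.
Qed.

Lemma normz (c p q : R) : 0 < p ^+ 2 + q ^+ 2 -> `|L u v p q| ^+ 2 = c * (p ^+ 2 + q ^+ 2) ->
  exists p' q', `|L u v p' q'| = 1 /\ c * (p' ^+ 2 + q' ^+ 2) = 1.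
Proof.
move=> hQ hN; have np := @Lpos _ _ hQ.
set n := `|L u v p q| in np hN.
exists (n^-1 * p), (n^-1 * q); split.
- by rewrite -LZ normrZ ger0_norm ?invr_ge0 ?ltW // mulVf // gt_eqF.
- have -> : c * ((n^-1 * p) ^+ 2 + (n^-1 * q) ^+ 2) = (c * (p ^+ 2 + q ^+ 2)) / n ^+ 2.
    by field; rewrite gt_eqF.
  by rewrite -hN divff // expf_neq0 // gt_eqF.
Qed.

Lemma Ldiff a b c d : L u v a b = L u v c d -> a = c /\ b = d.
Proof.
move=> h.
have : L u v (a - c) (b - d) = 0.
  by rewrite /L !scalerBl addrACA -opprD -/(L u v a b) -/(L u v c d) h subrr.
by move/indep => [/eqP]; rewrite subr_eq0 => /eqP -> /eqP; rewrite subr_eq0 => /eqP ->.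
Qed.

Lemma Lneg p q : - L u v p q = L u v (- p) (- q).
Proof. by rewrite /L opprD !scaleNr. Qed.
End Ext.
Arguments extr {R V u v}.
Arguments normz {R V u v}.
Arguments Ldiff {R V u v}.



Theorem mainTheorem3 (R : realType) (V : completeNormedModType R) (n : nat)
  (hn : (2 <= n)%N) (hdim : has_dim V n) (hsmooth : smooth V) :
  exists x y : V, [/\ `|x| = 1, `|y| = 1, y <> x, y <> - x & weak_CPP x y].
Proof.
case: hdim => e [_ hind].
have h0 : (0 < n)%N by lia.
have h1 : (1 < n)%N by lia.
pose i0 := Ordinal h0; pose i1 := Ordinal h1.
have i10 : i1 != i0 by apply/eqP => /(congr1 val).
pose u := e i0; pose v := e i1.
have indep : forall p q, L u v p q = 0 -> p = 0 /\ q = 0.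
  move=> p q hpq.
  pose c := fun i : 'I_n => if i == i0 then p else if i == i1 then q else 0.
  have hs : \sum_(i < n) c i *: e i = L u v p q.
    rewrite (bigD1 i0) //= (bigD1 i1) //=.
    rewrite big1 ?addr0; last first.
      by move=> i /andP[ne0 ne1]; rewrite /c (negbTE ne0) (negbTE ne1) scale0r.
    by rewrite /c eqxx (negbTE i10) eqxx.
  have H := hind c; rewrite hs in H; have {}H := H hpq.
  split; [have := H i0 | have := H i1]; by rewrite /c ?eqxx ?(negbTE i10).
have [m [M [m0 hb [pa [qa [hQa hNa]]]] [pb [qb [hQb hNb]]]]] := extr indep.
have hlo : forall p q, m * (p ^+ 2 + q ^+ 2) <= `|L u v p q| ^+ 2.
  by move=> p q; case/andP: (hb p q).
have hup : forall p q, `|L u v p q| ^+ 2 <= M * (p ^+ 2 + q ^+ 2).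
  by move=> p q; case/andP: (hb p q).
have [p0 [q0 [nx qx]]] := normz indep _ _ _ hQa hNa.
have [p1 [q1 [ny qy]]] := normz indep _ _ _ hQb hNb.
case: (eqVneq m M) => hmM.
- have qy' : M * ((- q0) ^+ 2 + p0 ^+ 2) = 1 by rewrite -hmM sqrrN addrC.
  have qx' : m * ((- q0) ^+ 2 + p0 ^+ 2) = 1 by rewrite sqrrN addrC.
  have ny' : `|L u v (- q0) p0| = 1.
    have := hlo (- q0) p0; have := hup (- q0) p0; rewrite qx' qy' => ha hb'.
    apply/eqP; rewrite eq_le; apply/andP; split.
    + by apply: sq_ge1.
    + by apply: sq_le1.
  exists (L u v p0 q0), (L u v (- q0) p0); split => //.
  + move/(Ldiff indep) => [e1 e2].
    have : p0 = 0 /\ q0 = 0 by split; lra.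
    by case=> a b; move: qx; rewrite a b expr0n /= addr0 mulr0 => /eqP; rewrite eq_sym oner_eq0.
  + rewrite Lneg; move/(Ldiff indep) => [e1 e2].
    have : p0 = 0 /\ q0 = 0 by split; lra.
    by case=> a b; move: qx; rewrite a b expr0n /= addr0 mulr0 => /eqP; rewrite eq_sym oner_eq0.
  + exact: (core m0 hlo hup).
- have neq : forall s t : R, L u v p1 q1 = L u v s t -> m * (s ^+ 2 + t ^+ 2) = 1 ->
       M * (s ^+ 2 + t ^+ 2) = 1 -> False.
    move=> s t _ k1 k2; move/eqP: hmM; apply.
    have hQ : s ^+ 2 + t ^+ 2 != 0 by apply/eqP => h; move: k1; rewrite h mulr0 => /eqP; rewrite eq_sym oner_eq0.
    by apply: (mulIf hQ); rewrite k1 k2.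
  exists (L u v p0 q0), (L u v p1 q1); split => //.
  + move=> h; apply: (neq p0 q0 h qx).
    by have [<- <-] := Ldiff indep _ _ _ _ h.
  + rewrite Lneg => h; apply: (neq (- p0) (- q0) h); first by rewrite !sqrrN.
    by have [<- <-] := Ldiff indep _ _ _ _ h.
  + exact: (core m0 hlo hup).
Qed.
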